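(* Let $R$ be a ring and $\sigma: P_{-1}\to P_0$ a homomorphism between projective right $R$-modules; $\sigma^+:P_0^+\to P_{-1}^+$ is then a homomorphism between injective left $R$-modules. (1) $\mathcal{T}_\sigma=\mathcal{C}_{\sigma^+}$, and a left $R$-module $X$ belongs to $\mathcal{C}_{\sigma^+}$ if and only if $X^+\in\mathcal{D}_\sigma$. (2) If $\sigma$ is of finite type, then a right $R$-module $Y$ belongs to $\mathcal{D}_\sigma$ if and only if $Y^+\in\mathcal{C}_{\sigma^+}$ (so $\mathcal{D}_\sigma$ and $\mathcal{C}_{\sigma^+}$ are dual definable categories). (3) A homomorphism $\lambda$ between injective left $R$-modules is of cofinite type if and only if there is a homomorphism $\sigma$ between projective right $R$-modules, of finite type, such that $\mathcal{C}_\lambda=\mathcal{C}_{\sigma^+}$.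
   Context: $M^+=\operatorname{Hom}_{\mathbb Z}(M,\mathbb{Q}/\mathbb{Z})$ denotes the character dual. For a homomorphism $\alpha: A\to B$ of right $R$-modules, $\mathcal{D}_\alpha=\{X\in\text{Mod-}R \mid \operatorname{Hom}_R(\alpha,X)\text{ is surjective}\}$; $\alpha$ (with $A,B$ projective) is of finite type if there are homomorphisms $\sigma_i$ ($i\in I$) between finitely generated projective right modules with $\mathcal{D}_\alpha=\bigcap_i\mathcal{D}_{\sigma_i}$. For a homomorphism $\lambda:E_0\to E_1$ of left $R$-modules, $\mathcal{C}_\lambda=\{X\in R\text{-Mod}\mid \operatorname{Hom}_R(X,\lambda):\operatorname{Hom}_R(X,E_0)\to\operatorname{Hom}_R(X,E_1)\text{ is surjective}\}$. For a homomorphism $\sigma$ of projective right modules, $\mathcal{T}_\sigma=\{X\in R\text{-Mod}\mid \sigma\otimes_R X\text{ is injective}\}$. A homomorphism $\lambda$ between injective left modules is of cofinite type if there is a set of homomorphisms $\sigma_i$ ($i\in I$) between finitely generated projective right $R$-modules with $\mathcal{C}_\lambda=\bigcap_{i\in I}\mathcal{T}_{\sigma_i}$. *)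

(* Defs.v *)
From HB Require Import structures.
From mathcomp Require Import all_boot all_order all_algebra.
From mathcomp Require Import boolp.
Set Implicit Arguments. Unset Strict Implicit. Unset Printing Implicit Defensive.
Import Order.TTheory GRing.Theory Num.Theory.
Local Open Scope ring_scope.

(* The abelian group Q/Z, represented by rationals in [0,1).                 *)

Definition frac (r : rat) : rat := r - (Num.floor r)%:~R.

Lemma frac_ge0 r : 0 <= frac r.
Proof. by rewrite /frac subr_ge0 floor_le. Qed.

Lemma frac_lt1 r : frac r < 1.
Proof. by rewrite /frac ltrBlDr addrC -[1]/(1%:~R) -intrD floorD1_gt. Qed.

Lemma frac_id r : 0 <= r < 1 -> frac r = r.
Proof.
move=> /andP[r0 r1]; rewrite /frac.
have -> : Num.floor r = 0 by apply: floor_def; rewrite r0 add0r r1.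
by rewrite subr0.
Qed.

Lemma fracDz r (z : int) : frac (r + z%:~R) = frac r.
Proof.
rewrite /frac floorDrz ?intr_int // intrKfloor intrD.
by rewrite opprD addrACA subrr addr0.
Qed.

Lemma frac_fracl a b : frac (frac a + b) = frac (a + b).
Proof.
have -> : frac a + b = (a + b) + (- Num.floor a)%:~R.
  by rewrite /frac intrN addrAC.
by rewrite fracDz.
Qed.

Lemma frac_fracr a b : frac (a + frac b) = frac (a + b).
Proof. by rewrite addrC frac_fracl addrC. Qed.

Definition QZ := {r : rat | 0 <= r < 1}.

Definition qz_of (r : rat) : QZ :=
  exist _ (frac r) (introT andP (conj (frac_ge0 r) (frac_lt1 r))).

Definition qz0 : QZ := qz_of 0.
Definition qzopp (a : QZ) : QZ := qz_of (- sval a).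
Definition qzadd (a b : QZ) : QZ := qz_of (sval a + sval b).

Lemma qz_inj (a b : QZ) : sval a = sval b -> a = b.
Proof.
case: a b => [a Ha] [b Hb] /= ab; subst b.
by rewrite (Prop_irrelevance Ha Hb).
Qed.

Lemma qz_of_val (a : QZ) : qz_of (sval a) = a.
Proof. by apply: qz_inj; rewrite /= frac_id //; case: a. Qed.

Lemma qzaddA : associative qzadd.
Proof.
move=> a b c; apply: qz_inj => /=.
by rewrite frac_fracl frac_fracr addrA.
Qed.

Lemma qzaddC : commutative qzadd.
Proof. by move=> a b; apply: qz_inj; rewrite /= addrC. Qed.

Lemma qzadd0 : left_id qz0 qzadd.
Proof.
move=> a; apply: qz_inj; rewrite /= frac_fracl add0r frac_id //; by case: a.
Qed.

Lemma qzaddN : left_inverse qz0 qzopp qzadd.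
Proof. by move=> a; apply: qz_inj; rewrite /= frac_fracl addNr. Qed.

HB.instance Definition _ := Choice.copy QZ {r : rat | 0 <= r < 1}.
HB.instance Definition _ := GRing.isZmodule.Build QZ qzaddA qzaddC qzadd0 qzaddN.

(* Modules.  A left R-module is an [lmodType R]; a right R-module is an      *)
(* [lmodType R^c] (left module over the opposite ring), with m * r written   *)
(* as [(r : R^c) *: m].  Homomorphisms are MathComp linear maps.             *)

Section Modules.
Variable S : pzRingType.

Definition projective_mod (P : lmodType S) : Prop :=
  forall (M N : lmodType S) (g : {linear M -> N}) (f : {linear P -> N}),
    (forall n : N, exists m : M, g m = n) ->
    exists h : {linear P -> M}, forall p, g (h p) = f p.

Definition injective_mod (E : lmodType S) : Prop :=
  forall (M N : lmodType S) (g : {linear M -> N}) (f : {linear M -> E}),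
    injective g ->
    exists h : {linear N -> E}, forall m, h (g m) = f m.

Definition fin_gen (M : lmodType S) : Prop :=
  exists (n : nat) (v : 'I_n -> M),
    forall m : M, exists c : 'I_n -> S, m = \sum_(i < n) c i *: v i.

Definition Dcat (A B : lmodType S) (alpha : A -> B) (X : lmodType S) : Prop :=
  forall f : {linear A -> X}, exists g : {linear B -> X},
    forall a, g (alpha a) = f a.

Definition Ccat (E0 E1 : lmodType S) (lambda : E0 -> E1) (X : lmodType S) : Prop :=
  forall g : {linear X -> E1}, exists h : {linear X -> E0},
    forall x, lambda (h x) = g x.

End Modules.

Section Ring.
Variable R : pzRingType.

Section DualDef.
Variable M : zmodType.
Record chardual := CharDual {
  cd_fun :> M -> QZ;
  cd_add : forall x y, cd_fun (x + y) = cd_fun x + cd_fun y }.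

HB.instance Definition _ := gen_eqMixin chardual.
HB.instance Definition _ := gen_choiceMixin chardual.

Lemma cd_ext (f g : chardual) : f =1 g -> f = g.
Proof.
case: f g => [f Hf] [g Hg] /= /funext fg; subst g.
by rewrite (Prop_irrelevance Hf Hg).
Qed.

Lemma cd0_add : forall x y : M, (0 : QZ) = 0 + 0. Proof. by move=> *; rewrite addr0. Qed.
Definition cd0 : chardual := CharDual cd0_add.

Lemma cdopp_add (f : chardual) :
  forall x y, - f (x + y) = - f x + - f y.
Proof. by move=> x y; rewrite cd_add opprD. Qed.
Definition cdopp (f : chardual) : chardual := CharDual (cdopp_add f).

Lemma cdadd_add (f g : chardual) :
  forall x y, f (x + y) + g (x + y) = (f x + g x) + (f y + g y).
Proof. by move=> x y; rewrite !cd_add addrACA. Qed.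
Definition cdadd (f g : chardual) : chardual := CharDual (cdadd_add f g).

Lemma cdaddA : associative cdadd.
Proof. by move=> f g h; apply: cd_ext => x /=; rewrite addrA. Qed.
Lemma cdaddC : commutative cdadd.
Proof. by move=> f g; apply: cd_ext => x /=; rewrite addrC. Qed.
Lemma cdadd0 : left_id cd0 cdadd.
Proof. by move=> f; apply: cd_ext => x /=; rewrite add0r. Qed.
Lemma cdaddN : left_inverse cd0 cdopp cdadd.
Proof. by move=> f; apply: cd_ext => x /=; rewrite addNr. Qed.

HB.instance Definition _ := GRing.isZmodule.Build chardual cdaddA cdaddC cdadd0 cdaddN.

Lemma cdcomp_add (N : zmodType) (s : {additive N -> M}) (f : chardual) :
  forall x y, f (s (x + y)) = f (s x) + f (s y).
Proof. by move=> x y; rewrite raddfD cd_add. Qed.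
End DualDef.

Definition cdcomp (N M : zmodType) (s : {additive N -> M}) (f : chardual M)
  : chardual N := CharDual (cdcomp_add s f).

Definition dualL (X : lmodType R) : Type := chardual X.
HB.instance Definition _ (X : lmodType R) := GRing.Zmodule.on (dualL X).

Section DualL.
Variable X : lmodType R.
Lemma scL_add (r : R^c) (f : dualL X) :
  forall x y : X, f ((r : R) *: (x + y)) = f ((r : R) *: x) + f ((r : R) *: y).
Proof. by move=> x y; rewrite scalerDr cd_add. Qed.
Definition scL (r : R^c) (f : dualL X) : dualL X := CharDual (scL_add r f).
Lemma scLA a b (f : dualL X) : scL a (scL b f) = scL (a * b) f.
Proof. by apply: cd_ext => x /=; rewrite scalerA. Qed.
Lemma scL1 : left_id 1 scL.
Proof. by move=> f; apply: cd_ext => x /=; rewrite scale1r. Qed.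
Lemma scLDr : right_distributive scL +%R.
Proof. by move=> a f g; apply: cd_ext. Qed.
Lemma scLDl (f : dualL X) : {morph scL^~ f : a b / a + b}.
Proof. by move=> a b; apply: cd_ext => x /=; rewrite scalerDl cd_add. Qed.
HB.instance Definition _ :=
  GRing.Zmodule_isLmodule.Build R^c (dualL X) scLA scL1 scLDr scLDl.
End DualL.

Definition dualR (Y : lmodType R^c) : Type := chardual Y.
HB.instance Definition _ (Y : lmodType R^c) := GRing.Zmodule.on (dualR Y).

Section DualR.
Variable Y : lmodType R^c.
Lemma scR_add (r : R) (f : dualR Y) :
  forall x y : Y, f ((r : R^c) *: (x + y)) = f ((r : R^c) *: x) + f ((r : R^c) *: y).
Proof. by move=> x y; rewrite scalerDr cd_add. Qed.
Definition scR (r : R) (f : dualR Y) : dualR Y := CharDual (scR_add r f).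
Lemma scRA a b (f : dualR Y) : scR a (scR b f) = scR (a * b) f.
Proof. by apply: cd_ext => x /=; rewrite scalerA. Qed.
Lemma scR1 : left_id 1 scR.
Proof. by move=> f; apply: cd_ext => x /=; rewrite scale1r. Qed.
Lemma scRDr : right_distributive scR +%R.
Proof. by move=> a f g; apply: cd_ext. Qed.
Lemma scRDl (f : dualR Y) : {morph scR^~ f : a b / a + b}.
Proof. by move=> a b; apply: cd_ext => x /=; rewrite scalerDl cd_add. Qed.
HB.instance Definition _ :=
  GRing.Zmodule_isLmodule.Build R (dualR Y) scRA scR1 scRDr scRDl.
End DualR.

Definition dualmapR (P Q : lmodType R^c) (sigma : {linear P -> Q})
  (f : dualR Q) : dualR P := cdcomp sigma f.

(* Tensor product P (x)_R X of a right module P and a left module X,         *)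
(* presented as formal sums (lists of pairs) modulo the congruence generated *)
(* by commutativity, biadditivity, R-balancedness and 0 (x) x = 0.           *)

Section Tensor.
Variables (P : lmodType R^c) (X : lmodType R).

Inductive teq : seq (P * X) -> seq (P * X) -> Prop :=
| teq_refl s : teq s s
| teq_sym s t : teq s t -> teq t s
| teq_trans s t u : teq s t -> teq t u -> teq s u
| teq_cat s1 t1 s2 t2 : teq s1 t1 -> teq s2 t2 -> teq (s1 ++ s2) (t1 ++ t2)
| teq_comm a b : teq [:: a; b] [:: b; a]
| teq_addl p p' x : teq [:: (p + p', x)] [:: (p, x); (p', x)]
| teq_addr p x x' : teq [:: (p, x + x')] [:: (p, x); (p, x')]
| teq_bal p (r : R) x : teq [:: ((r : R^c) *: p, x)] [:: (p, r *: x)]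
| teq_zero x : teq [:: (0, x)] [::].
End Tensor.

(* T_sigma : left modules X with sigma (x) X injective *)
Definition Tcat (P Q : lmodType R^c) (sigma : P -> Q) (X : lmodType R) : Prop :=
  forall s t : seq (P * X),
    teq (map (fun px => (sigma px.1, px.2)) s) (map (fun px => (sigma px.1, px.2)) t) ->
    teq s t.

Definition finite_type (A B : lmodType R^c) (alpha : A -> B) : Prop :=
  exists (I : Type) (P Q : I -> lmodType R^c) (s : forall i, {linear P i -> Q i}),
    (forall i, fin_gen (P i) /\ projective_mod (P i) /\
               fin_gen (Q i) /\ projective_mod (Q i)) /\
    (forall Y : lmodType R^c, Dcat alpha Y <-> forall i, Dcat (s i) Y).

Definition cofinite_type (E0 E1 : lmodType R) (lambda : E0 -> E1) : Prop :=
  exists (I : Type) (P Q : I -> lmodType R^c) (s : forall i, {linear P i -> Q i}),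
    (forall i, fin_gen (P i) /\ projective_mod (P i) /\
               fin_gen (Q i) /\ projective_mod (Q i)) /\
    (forall X : lmodType R, Ccat lambda X <-> forall i, Tcat (s i) X).

End Ring.

(* Main.v *)
Require Import Defs.
From HB Require Import structures.
From mathcomp Require Import all_boot all_order all_algebra.
From mathcomp Require Import boolp classical_sets.
Set Implicit Arguments. Unset Strict Implicit. Unset Printing Implicit Defensive.
Import Order.TTheory GRing.Theory Num.Theory.
Local Open Scope ring_scope.

Lemma qz_ofD a b : qz_of (a + b) = qz_of a + qz_of b.
Proof. apply: qz_inj => /=; by rewrite frac_fracl frac_fracr. Qed.

Lemma qz_ofMn a n : qz_of (a *+ n) = qz_of a *+ n.
Proof.
elim: n => [|n IH]; first by [].
by rewrite !mulrS qz_ofD IH.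
Qed.

Lemma qz_of_int (z : int) : qz_of z%:~R = 0.
Proof. by apply: qz_inj => /=; rewrite -(add0r z%:~R) fracDz. Qed.

Lemma qz_div (a : QZ) (n : nat) : (0 < n)%N -> exists c : QZ, c *+ n = a.
Proof.
move=> n0; exists (qz_of (sval a / n%:R)).
rewrite -qz_ofMn -[X in qz_of X]mulr_natr divfK ?qz_of_val //.
by rewrite pnatr_eq0 -lt0n.
Qed.

Lemma frac0 : Defs.frac 0 = 0.
Proof. by rewrite frac_id // lexx ltr01. Qed.
Lemma sval0 : sval (0 : QZ) = 0.
Proof. exact: frac0. Qed.

Section Ext.
Variable G : zmodType.
Implicit Types (S : G -> Prop) (f : G -> QZ).

Definition subgrp S := S 0 /\ forall x y, S x -> S y -> S (x - y).
Definition addon S f := forall x y, S x -> S y -> f (x - y) = f x - f y.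

Section SG.
Variables (S : G -> Prop) (HS : subgrp S).
Lemma sg0 : S 0. Proof. by case: HS. Qed.
Lemma sgB x y : S x -> S y -> S (x - y). Proof. by case: HS => _; apply. Qed.
Lemma sgN x : S x -> S (- x).
Proof. by move=> Sx; rewrite -sub0r; apply: sgB => //; apply: sg0. Qed.
Lemma sgD x y : S x -> S y -> S (x + y).
Proof. by move=> Sx Sy; rewrite -[y]opprK; apply: sgB => //; apply: sgN. Qed.
Lemma sgMn x n : S x -> S (x *+ n).
Proof. move=> Sx; elim: n => [|n IH]; [exact: sg0| by rewrite mulrS; apply: sgD]. Qed.
Lemma sgMz x k : S x -> S (x *~ k).
Proof. by move=> Sx; case: k => n /=; [apply: sgMn | apply: sgN; apply: sgMn]. Qed.

Variables (f : G -> QZ) (Hf : addon S f).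
Lemma ao0 : f 0 = 0.
Proof. by have := Hf sg0 sg0; rewrite subrr => ->; rewrite subrr. Qed.
Lemma aoN x : S x -> f (- x) = - f x.
Proof. by move=> Sx; rewrite -sub0r Hf ?ao0 ?sub0r //; apply: sg0. Qed.
Lemma aoD x y : S x -> S y -> f (x + y) = f x + f y.
Proof.
move=> Sx Sy; rewrite -[y]opprK Hf ?aoN ?opprK //; exact: sgN.
Qed.
Lemma aoMn x n : S x -> f (x *+ n) = f x *+ n.
Proof.
move=> Sx; elim: n => [|n IH]; first exact: ao0.
by rewrite !mulrS aoD ?IH //; apply: sgMn.
Qed.
Lemma aoMz x k : S x -> f (x *~ k) = f x *~ k.
Proof. by move=> Sx; case: k => n /=; rewrite ?aoN ?aoMn //; apply: sgMn. Qed.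
End SG.

Definition condc S f (h : G) (c : QZ) :=
  forall k : int, S (h *~ k) -> f (h *~ k) = c *~ k.

Lemma ext_step S f h c : subgrp S -> addon S f -> condc S f h c ->
  exists S' f', [/\ subgrp S', addon S' f', (forall x, S x -> S' x),
     (forall x, S x -> f' x = f x) & S' h /\ f' h = c].
Proof.
move=> HS Hf Hc.
have uniq s s' k k' : S s -> S s' -> s + h *~ k = s' + h *~ k' ->
    f s + c *~ k = f s' + c *~ k'.
  move=> Ss Ss' E.
  have E2 : s - s' = h *~ (k' - k).
    rewrite mulrzBr; apply/eqP.
    by rewrite -subr_eq0 opprB addrACA -opprD E subrr.
  have : f (s - s') = c *~ (k' - k) by rewrite E2 Hc // -E2; apply: sgB.
  rewrite Hf // mulrzBr => Hfs.
  by apply/eqP; rewrite -subr_eq0 opprD addrACA Hfs addrA subrK subrr.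
pose S' x := exists s k, S s /\ x = s + h *~ k.
pose f' x := match pselect (exists sk : G * int, S sk.1 /\ x = sk.1 + h *~ sk.2) with
  | left P => let sk := projT1 (cid P) in f sk.1 + c *~ sk.2
  | right _ => 0 end.
have f'E s k : S s -> f' (s + h *~ k) = f s + c *~ k.
  move=> Ss; rewrite /f'; case: pselect => [P|nP]; last first.
    by exfalso; apply: nP; exists (s, k).
  case: (cid P) => [[s1 k1]] /= [Ss1 E].
  by apply: uniq => //; rewrite E.
exists S', f'; split.
- split; first by exists 0, 0; split; [apply: sg0 | rewrite addr0].
  move=> x y [s [k [Ss ->]]] [s' [k' [Ss' ->]]].
  exists (s - s'), (k - k'); split; first exact: sgB.
  by rewrite mulrzBr opprD addrACA.
- move=> x y [s [k [Ss ->]]] [s' [k' [Ss' ->]]].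
  have -> : s + h *~ k - (s' + h *~ k') = (s - s') + h *~ (k - k').
    by rewrite mulrzBr opprD addrACA.
  rewrite f'E; last exact: sgB.
  by rewrite !f'E // Hf // mulrzBr opprD addrACA.
- by move=> x Sx; exists x, 0; split; rewrite // addr0.
- by move=> x Sx; have := f'E x 0 Sx; rewrite !mulr0z !addr0.
- split; first by exists 0, 1; split; [apply: sg0|rewrite add0r].
  have := f'E 0 1 (sg0 HS); by rewrite (ao0 HS Hf) !add0r.
Qed.

Lemma order_cases S h : subgrp S ->
  (forall m, S (h *+ m) -> m = 0%N) \/
  exists n0, [/\ (0 < n0)%N, S (h *+ n0) & forall m, S (h *+ m) -> (n0 %| m)%N].
Proof.
move=> HS.
case: (pselect (exists n, (0 < n)%N && `[< S (h *+ n) >])) => [ex|nex]; last first.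
  left=> m Sm; apply/eqP; rewrite -leqn0 leqNgt; apply/negP => m0.
  by apply: nex; exists m; rewrite m0; apply/asboolP.
right; exists (ex_minn ex); case: ex_minnP => n0 /andP[n0p /asboolP Sn0] mn.
split => // m Sm; rewrite /dvdn; apply/negPn/negP => r0.
have : (n0 <= m %% n0)%N.
  apply: mn; rewrite lt0n r0 /=; apply/asboolP.
  have -> : h *+ (m %% n0) = h *+ m - h *+ (m %/ n0 * n0).
    by rewrite {2}(divn_eq m n0) mulrnDr addrAC subrr add0r.
  apply: sgB => //; rewrite mulnC mulrnA; exact: sgMn.
by rewrite leqNgt ltn_pmod.
Qed.

Lemma condc_nat S f h c : subgrp S -> addon S f ->
  (forall m, S (h *+ m) -> f (h *+ m) = c *+ m) -> condc S f h c.
Proof.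
move=> HS Hf Hm [m|m] /= Sk; first exact: Hm.
have Sm : S (h *+ m.+1) by rewrite -[_ *+ _]opprK; apply: sgN.
by rewrite (aoN HS Hf) // Hm.
Qed.

Lemma exists_c S f h : subgrp S -> addon S f -> exists c, condc S f h c.
Proof.
move=> HS Hf; case: (order_cases h HS) => [H0|[n0 [n0p Sn0 Hd]]].
  exists 0; apply: condc_nat => // m /H0 ->; by rewrite mulr0n (ao0 HS Hf).
have [c Hc] := qz_div (f (h *+ n0)) n0p.
exists c; apply: condc_nat => // m /Hd /dvdnP [q ->].
by rewrite !(mulnC q) !mulrnA (aoMn HS Hf) // Hc.
Qed.

Lemma exists_c_sep S h : subgrp S -> ~ S h ->
  exists c, c != 0 /\ condc S (fun _ => 0) h c.
Proof.
move=> HS nSh.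
have Hf : addon S (fun _ => (0 : QZ)) by move=> *; rewrite subr0.
case: (order_cases h HS) => [H0|[n0 [n0p Sn0 Hd]]].
  exists (qz_of (2%:R^-1)); split.
    apply/negP => /eqP/(congr1 sval) /=; rewrite frac_id; last first.
      by rewrite invr_ge0 ler0n /= invf_lt1 // ltr1n.
    by move=> /eqP; rewrite frac0 invr_eq0 pnatr_eq0.
  apply: condc_nat => // m /H0 ->; by rewrite mulr0n.
have n01 : n0 != 1%N by apply/eqP => E; apply: nSh; rewrite -[h]mulr1n -E.
exists (qz_of (n0%:R^-1)); split.
  apply/negP => /eqP/(congr1 sval) /=; rewrite frac_id; last first.
    rewrite invr_ge0 ler0n /= invf_lt1 ?ltr0n // ltr1n.
    by rewrite ltn_neqAle eq_sym n01 n0p.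
  move=> /eqP; rewrite frac0 invr_eq0 pnatr_eq0 => /eqP n00.
  by rewrite n00 in n0p.
have Hc : qz_of (n0%:R^-1) *+ n0 = 0.
  rewrite -qz_ofMn -[X in qz_of X]mulr_natr mulVf; last by rewrite pnatr_eq0 -lt0n.
  exact: (qz_of_int 1).
apply: condc_nat => // m /Hd /dvdnP [q ->].
by rewrite (mulnC q) mulrnA Hc mul0rn.
Qed.

Record pext (S0 : G -> Prop) (f0 : G -> QZ) := PExt {
  pdom : G -> Prop; pfn : G -> QZ;
  psub : subgrp pdom; padd : addon pdom pfn;
  pincl : forall x, S0 x -> pdom x;
  pagree : forall x, S0 x -> pfn x = f0 x }.

Lemma ext_char S0 f0 : subgrp S0 -> addon S0 f0 ->
  exists g : G -> QZ, (forall x y, g (x - y) = g x - g y) /\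
                      forall x, S0 x -> g x = f0 x.
Proof.
move=> HS0 Hf0.
pose t0 := @PExt S0 f0 S0 f0 HS0 Hf0 (fun x h => h) (fun x _ => erefl).
pose le (a b : pext S0 f0) := `[< (forall x, pdom a x -> pdom b x) /\
                                  (forall x, pdom a x -> pfn b x = pfn a x) >].
have [t tmax] : exists t, premaximal le t.
  apply: (@ZL_preorder _ t0).
  - by move=> a; apply/asboolP.
  - move=> a b c /asboolP [ab1 ab2] /asboolP [bc1 bc2]; apply/asboolP; split.
      by move=> x /ab1 /bc1.
    by move=> x ax; rewrite bc2 ?ab2 //; apply: ab1.
  move=> A Atot.
  case: (pselect (exists a, A a)) => [[a0 Aa0]|nA]; last first.
    by exists t0 => s As; exfalso; apply: nA; exists s.
  pose D x := exists a, A a /\ pdom a x.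
  pose F x := match pselect (D x) with
    | left P => pfn (projT1 (cid P)) x | right _ => 0 end.
  have FE a x : A a -> pdom a x -> F x = pfn a x.
    move=> Aa ax; rewrite /F; case: pselect => [P|nP]; last by exfalso; apply: nP; exists a.
    case: (cid P) => b [Ab bx] /=.
    case: (Atot a b Aa Ab) => /asboolP [h1 h2]; first by rewrite h2.
    by rewrite h2.
  have common a b x y : A a -> A b -> pdom a x -> pdom b y ->
      exists c, [/\ A c, pdom c x & pdom c y].
    move=> Aa Ab ax bY; case: (Atot a b Aa Ab) => /asboolP [h1 h2].
      by exists b; split => //; apply: h1.
    by exists a; split => //; apply: h1.
  have HD : subgrp D.
    split; first by exists a0; split => //; apply: sg0 (@psub _ _ a0).
    move=> x y [a [Aa ax]] [b [Ab bY]]; have [c [Ac cx cy]] := common _ _ _ _ Aa Ab ax bY.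
    by exists c; split => //; apply: sgB (@psub _ _ c) _ _ cx cy.
  have HF : addon D F.
    move=> x y [a [Aa ax]] [b [Ab bY]]; have [c [Ac cx cy]] := common _ _ _ _ Aa Ab ax bY.
    rewrite !(FE c) //; first exact: padd.
    exact: sgB (@psub _ _ c) _ _ cx cy.
  have Dincl x : S0 x -> D x by move=> Sx; exists a0; split => //; apply: pincl.
  have Fag x : S0 x -> F x = f0 x.
    by move=> Sx; rewrite (FE a0) ?pagree //; apply: pincl.
  exists (PExt HD HF Dincl Fag) => s As; apply/asboolP; split => /=.
    by move=> x sx; exists s.
  by move=> x sx; apply: FE.
exists (pfn t); split; last exact: pagree.
suff all x : pdom t x.
  by move=> x y; apply: padd => //; apply: all.
apply: contrapT => ntx.
have [c Hc] := exists_c x (@psub _ _ t) (@padd _ _ t).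
have [S' [f' [HS' Hf' inc agr [S'x f'x]]]] := ext_step (@psub _ _ t) (@padd _ _ t) Hc.
have inc0 y : S0 y -> S' y by move=> /(pincl t) /inc.
have agr0 y : S0 y -> f' y = f0 y by move=> Sy; rewrite agr ?pagree //; apply: pincl.
have H := tmax (PExt HS' Hf' inc0 agr0).
have /asboolP [/= h _] := H (introT (asboolP _) (conj inc agr)).
by apply: ntx; apply: h.
Qed.

Lemma sep_char S h : subgrp S -> ~ S h ->
  exists g : G -> QZ, [/\ (forall x y, g (x - y) = g x - g y),
                      (forall x, S x -> g x = 0) & g h != 0].
Proof.
move=> HS nSh.
have Hf : addon S (fun _ => (0 : QZ)) by move=> *; rewrite subr0.
have [c [c0 Hc]] := exists_c_sep HS nSh.
have [S' [f' [HS' Hf' inc agr [S'h f'h]]]] := ext_step HS Hf Hc.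
have [g [Hg gf]] := ext_char HS' Hf'.
exists g; split => //; first by move=> x Sx; rewrite gf ?agr //; apply: inc.
by rewrite gf // f'h.
Qed.
End Ext.

Lemma additiveD (A B : zmodType) (u : A -> B) :
  (forall x y, u (x - y) = u x - u y) -> forall x y, u (x + y) = u x + u y.
Proof.
move=> H x y.
have u0 : u 0 = 0 by rewrite -(subrr 0) H subrr.
have uN z : u (- z) = - u z by rewrite -sub0r H u0 sub0r.
by have := H x (- y); rewrite opprK => ->; rewrite uN opprK.
Qed.

Lemma cd_0 (A : zmodType) (f : chardual A) : f 0 = 0.
Proof.
have := cd_add f 0 0; rewrite addr0 => /(congr1 (fun z => z - f 0)).
by rewrite subrr addrK => <-.
Qed.
Lemma cd_B (A : zmodType) (f : chardual A) x y : f (x - y) = f x - f y.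
Proof.
have := cd_add f (x - y) y; rewrite subrK => ->; by rewrite addrK.
Qed.

Definition mkchar (A : zmodType) (g : A -> QZ) (H : forall x y, g (x - y) = g x - g y)
  : chardual A := CharDual (additiveD H).

Lemma ext_along (A B : zmodType) (u : A -> B) (chi : chardual A) :
  (forall x y, u (x - y) = u x - u y) -> injective u ->
  exists psi : chardual B, forall a, psi (u a) = chi a.
Proof.
move=> Hu iu.
pose S0 (y : B) := exists a, u a = y.
pose f0 (y : B) := match pselect (S0 y) with
  | left P => chi (projT1 (cid P)) | right _ => 0 end.
have f0E a : f0 (u a) = chi a.
  rewrite /f0; case: pselect => [P|nP]; last by exfalso; apply: nP; exists a.
  by case: (cid P) => a' /= /iu ->.
have u0 : u 0 = 0 by rewrite -(subrr 0) Hu subrr.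
have HS : subgrp S0.
  split; first by exists 0.
  by move=> _ _ [a <-] [b <-]; exists (a - b); rewrite Hu.
have Hf : addon S0 f0.
  move=> _ _ [a <-] [b <-]; rewrite -Hu !f0E.
  have := cd_add chi (a - b) b; rewrite subrK => ->; by rewrite addrK.
have [g [Hg gf]] := ext_char HS Hf.
exists (mkchar Hg) => a /=; rewrite gf ?f0E //; by exists a.
Qed.

Lemma sep_zero (A : zmodType) (x : A) : x != 0 -> exists chi : chardual A, chi x != 0.
Proof.
move=> x0.
have HS : subgrp (fun y : A => y = 0).
  by split => // a b -> ->; rewrite subrr.
have [g [Hg g0 gx]] := sep_char HS (fun E => negP x0 (introT eqP E)).
by exists (mkchar Hg).
Qed.

Definition mkLin (S : pzRingType) (U V : lmodType S) (f : U -> V) (H : linear f)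
  : {linear U -> V} := HB.pack f (GRing.isLinear.Build S U V *:%R f H).
Lemma mkLinE (S : pzRingType) (U V : lmodType S) (f : U -> V) (H : linear f) x :
  @mkLin S U V f H x = f x.
Proof. by []. Qed.


Section Tup.
Variable U : zmodType.
Local Notation tup k := {ffun 'I_k -> U}.

Lemma cd_sum (A : zmodType) (chi : chardual A) (I : Type) (r : seq I) (F : I -> A) :
  chi (\sum_(i <- r) F i) = \sum_(i <- r) chi (F i).
Proof.
elim: r => [|a r IH]; first by rewrite !big_nil cd_0.
by rewrite !big_cons cd_add IH.
Qed.

Lemma cdsumE (A : zmodType) (I : Type) (r : seq I) (F : I -> chardual A) x :
  (\sum_(i <- r) F i) x = \sum_(i <- r) F i x.
Proof.
elim: r => [|a r IH]; first by rewrite !big_nil.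
by rewrite !big_cons -IH.
Qed.

Lemma tchar_add k (phi : {ffun 'I_k -> chardual U}) :
  forall y z : tup k, \sum_i phi i ((y + z) i) = \sum_i phi i (y i) + \sum_i phi i (z i).
Proof. by move=> y z; rewrite -big_split; apply: eq_bigr => i _; rewrite ffunE cd_add. Qed.
Definition tchar k (phi : {ffun 'I_k -> chardual U}) : chardual (tup k) :=
  CharDual (tchar_add phi).
Lemma tcharE k phi (y : tup k) : tchar phi y = \sum_i phi i (y i). Proof. by []. Qed.

Definition delta k (i : 'I_k) (u : U) : tup k := [ffun j => if j == i then u else 0].

Lemma tchar_delta k phi (i : 'I_k) u : tchar phi (delta i u) = phi i u.
Proof.
rewrite tcharE (bigD1 i) //= big1 ?addr0; first by rewrite ffunE eqxx.
by move=> j ji; rewrite ffunE (negbTE ji) cd_0.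
Qed.

Lemma tchar_inj k (phi1 phi2 : {ffun 'I_k -> chardual U}) :
  (forall y, tchar phi1 y = tchar phi2 y) -> phi1 = phi2.
Proof.
move=> H; apply/ffunP => i; apply: cd_ext => u.
by rewrite -!tchar_delta H.
Qed.

Lemma tup_decomp k (y : tup k) : y = \sum_i delta i (y i).
Proof.
apply/ffunP => j; rewrite sum_ffunE (bigD1 j) //= big1 ?addr0.
  by rewrite ffunE eqxx.
by move=> i ij; rewrite ffunE eq_sym (negbTE ij).
Qed.

Lemma delta_add k (i : 'I_k) : forall u v : U, delta i (u + v) = delta i u + delta i v.
Proof. by move=> u v; apply/ffunP => j; rewrite !ffunE; case: ifP; rewrite ?addr0. Qed.

Lemma char_tup k (chi : chardual (tup k)) : exists phi, forall y, chi y = tchar phi y.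
Proof.
have padd (i : 'I_k) : forall u v, chi (delta i (u + v)) = chi (delta i u) + chi (delta i v).
  by move=> u v; rewrite delta_add cd_add.
pose phi_i (i : 'I_k) : chardual U := CharDual (padd i).
exists [ffun i => phi_i i] => y.
by rewrite tcharE {1}(tup_decomp y) cd_sum; apply: eq_bigr => i _; rewrite ffunE.
Qed.

Definition adjoint a b (f : tup a -> tup b)
   (f' : {ffun 'I_b -> chardual U} -> {ffun 'I_a -> chardual U}) :=
  forall phi y, tchar phi (f y) = tchar (f' phi) y.

Lemma tchar0 k (y : tup k) : tchar 0 y = 0.
Proof. by rewrite tcharE big1 // => i _; rewrite ffunE. Qed.

Lemma G1 a b c (f : tup a -> tup b) (g : tup c -> tup b) f' g' :
  (forall x y, g (x - y) = g x - g y) -> adjoint f f' -> adjoint g g' ->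
  (forall y, exists z, f y = g z) <->
  (forall phi, g' phi = 0 -> f' phi = 0).
Proof.
move=> gB af ag; split.
- move=> H phi g0; apply: tchar_inj => y.
  rewrite -af; have [z ->] := H y.
  by rewrite ag g0 !tchar0.
- move=> H y; apply: contrapT => nex.
  pose S (w : tup b) := exists z, w = g z.
  have HS : subgrp S.
    have g0 : g 0 = 0 by have := gB 0 0; rewrite !subrr => ->.
    split; first by exists 0; rewrite g0.
    by move=> _ _ [z ->] [z' ->]; exists (z - z'); rewrite gB.
  have nS : ~ S (f y) by move=> [z E]; apply: nex; exists z.
  have [h [hB h0 hf]] := sep_char HS nS.
  have [phi Hphi] := char_tup (mkchar hB).
  have : g' phi = 0.
    apply: tchar_inj => z; rewrite -ag -Hphi tchar0 /=; apply: h0; by exists z.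
  move=> /H; move: hf.
  by rewrite -[h (f y)]/(mkchar hB (f y)) Hphi af => /negP nz E; apply: nz; rewrite E tchar0.
Qed.

Lemma G2 a b c (f : tup a -> tup b) (g : tup a -> tup c) f' g' :
  (forall x y, f (x - y) = f x - f y) -> (forall x y, g (x - y) = g x - g y) ->
  adjoint f f' -> adjoint g g' ->
  (forall y, f y = 0 -> g y = 0) <->
  (forall phi, exists phi', g' phi = f' phi').
Proof.
move=> fB gB af ag; split.
- move=> H phi.
  pose S (w : tup b) := exists y, w = f y.
  pose f0 (w : tup b) := match pselect (S w) with
    | left P => tchar phi (g (projT1 (cid P))) | right _ => 0 end.
  have f0E y : f0 (f y) = tchar phi (g y).
    rewrite /f0; case: pselect => [P|nP]; last by exfalso; apply: nP; exists y.
    case: (cid P) => y' /= E.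
    have : g (y - y') = 0 by apply: H; rewrite fB E subrr.
    by rewrite gB => /eqP; rewrite subr_eq0 => /eqP ->.
  have f00 : f 0 = 0 by have := fB 0 0; rewrite !subrr => ->.
  have HS : subgrp S.
    split; first by exists 0; rewrite f00.
    by move=> _ _ [y ->] [y' ->]; exists (y - y'); rewrite fB.
  have Hf : addon S f0.
    by move=> _ _ [y ->] [y' ->]; rewrite -fB !f0E gB cd_B.
  have [h [hB hf]] := ext_char HS Hf.
  have [phi' Hphi'] := char_tup (mkchar hB).
  exists phi'; apply: tchar_inj => y.
  rewrite -ag -af -Hphi' /= hf ?f0E //; by exists y.
- move=> H y fy0; apply/eqP; apply/negP => /negP ne.
  have [chi Hchi] := sep_zero ne.
  have [phi Hphi] := char_tup chi.
  have [phi' E] := H phi.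
  move: Hchi; rewrite Hphi ag E -af fy0.
  by rewrite cd_0 eqxx.
Qed.
End Tup.
Section Adj.
Variable R : pzRingType.

Section Swap.
Variables (X : lmodType R) (P : lmodType R^c).

Lemma swapL_add (g : {linear X -> dualR P}) (p : P) :
  forall x y : X, g (x + y) p = g x p + g y p.
Proof. by move=> x y; rewrite linearD. Qed.
Definition swapL_fun (g : {linear X -> dualR P}) (p : P) : dualL X :=
  CharDual (swapL_add g p).
Lemma swapL_lin (g : {linear X -> dualR P}) : linear (swapL_fun g).
Proof.
move=> r p q; apply: cd_ext => x /=.
rewrite cd_add.
have -> : g x (r *: p) = g ((r : R) *: x) p by rewrite linearZ.
by [].
Qed.
Definition swapL g := mkLin (swapL_lin g).
Lemma swapLE g p x : swapL g p x = g x p. Proof. by []. Qed.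

Lemma swapR_add (f : {linear P -> dualL X}) (x : X) :
  forall p q : P, f (p + q) x = f p x + f q x.
Proof. by move=> p q; rewrite linearD. Qed.
Definition swapR_fun (f : {linear P -> dualL X}) (x : X) : dualR P :=
  CharDual (swapR_add f x).
Lemma swapR_lin (f : {linear P -> dualL X}) : linear (swapR_fun f).
Proof.
move=> r x y; apply: cd_ext => p /=.
rewrite cd_add.
have -> : f p (r *: x) = f ((r : R^c) *: p) x by rewrite linearZ.
by [].
Qed.
Definition swapR f := mkLin (swapR_lin f).
Lemma swapRE f x p : swapR f x p = f p x. Proof. by []. Qed.
End Swap.

Lemma CD_iff (Pm1 P0 : lmodType R^c) (sigma : {linear Pm1 -> P0}) (X : lmodType R) :
  Ccat (dualmapR sigma) X <-> Dcat sigma (dualL X).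
Proof.
split.
- move=> HC f; have [h Hh] := HC (swapR f).
  exists (swapL h) => a; apply: cd_ext => x.
  by rewrite swapLE -[h x (sigma a)]/(dualmapR sigma (h x) a) Hh swapRE.
- move=> HD g; have [k Hk] := HD (swapL g).
  exists (swapR k) => x; apply: cd_ext => a.
  by rewrite -[dualmapR sigma _ a]/(swapR k x (sigma a)) swapRE Hk swapLE.
Qed.

Section DualMap.
Variables (M N : lmodType R) (g : {linear M -> N}).
Lemma dmL_add (psi : dualL N) : forall x y : M, psi (g (x + y)) = psi (g x) + psi (g y).
Proof. by move=> x y; rewrite linearD cd_add. Qed.
Definition dmL_fun (psi : dualL N) : dualL M := CharDual (dmL_add psi).
Lemma dmL_lin : linear dmL_fun.
Proof.
move=> r p q; apply: cd_ext => x /=.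
by rewrite linearZ.
Qed.
Definition dmL := mkLin dmL_lin.
Lemma dmLE psi x : dmL psi x = psi (g x). Proof. by []. Qed.
End DualMap.

Lemma dual_inj (P : lmodType R^c) : projective_mod P -> injective_mod (dualR P).
Proof.
move=> HP M N g f ig.
have surj : forall phi : dualL M, exists psi : dualL N, dmL g psi = phi.
  move=> phi; have [psi Hpsi] := @ext_along M N g phi (raddfB g) ig.
  by exists psi; apply: cd_ext => x; rewrite dmLE Hpsi.
have [h Hh] := HP _ _ (dmL g) (swapL f) surj.
exists (swapR h) => m; apply: cd_ext => p.
by rewrite swapRE -[h p (g m)]/(dmL g (h p) m) Hh swapLE.
Qed.

Section TensorQ.
Variables (P : lmodType R^c) (X : lmodType R).
Local Notation L := (seq (P * X)).

Lemma teq_cons a (s t : L) : teq s t -> teq (a :: s) (a :: t).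
Proof. by move=> H; apply: (teq_cat (teq_refl [:: a]) H). Qed.

Lemma teq_rot a (s : L) : teq (a :: s) (s ++ [:: a]).
Proof.
elim: s => [|b s IH] /=; first exact: teq_refl.
apply: teq_trans (teq_cons b IH).
exact: (teq_cat (teq_comm a b) (teq_refl s)).
Qed.

Lemma teq_catC (s t : L) : teq (s ++ t) (t ++ s).
Proof.
elim: s => [|a s IH] /=; first by rewrite cats0; exact: teq_refl.
apply: teq_trans (teq_cons a IH) _.
apply: teq_trans (teq_rot a (t ++ s)) _.
rewrite -catA; exact: teq_cat (teq_refl t) (teq_sym (teq_rot a s)).
Qed.

Definition negs (s : L) : L := map (fun px => (- px.1, px.2)) s.

Lemma negs_teq (s t : L) : teq s t -> teq (negs s) (negs t).
Proof.
elim=> {s t} /=.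
- by move=> s; apply: teq_refl.
- by move=> s t _; apply: teq_sym.
- by move=> s t u _ H1 _ H2; apply: teq_trans H1 H2.
- by move=> s1 t1 s2 t2 _ H1 _ H2; rewrite /negs !map_cat; apply: teq_cat.
- by move=> a b; apply: teq_comm.
- by move=> p p' x; rewrite opprD; apply: teq_addl.
- by move=> p x x'; apply: teq_addr.
- by move=> p r x; rewrite -scalerN; apply: teq_bal.
- by move=> x; rewrite oppr0; apply: teq_zero.
Qed.

Lemma negs_cancel (s : L) : teq (negs s ++ s) [::].
Proof.
elim: s => [|[p x] s IH] /=; first exact: teq_refl.
apply: teq_trans (teq_cons _ (teq_catC _ _)) _.
rewrite -cat1s catA -catA /=.
have H : teq (s ++ negs s) [::] := teq_trans (teq_catC _ _) IH.
apply: teq_trans (teq_cat (teq_refl [:: (- p, x); (p, x)]) H) _; rewrite cats0.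
apply: teq_trans (teq_sym (teq_addl _ _ _)) _.
by rewrite addNr; apply: teq_zero.
Qed.

Definition tens : Type := {C : L -> Prop | exists s, C = teq s}.
HB.instance Definition _ := gen_eqMixin tens.
HB.instance Definition _ := gen_choiceMixin tens.

Definition tpi (s : L) : tens := exist _ (teq s) (ex_intro _ s erefl).

Lemma tpi_eq (s t : L) : tpi s = tpi t <-> teq s t.
Proof.
split.
- move=> /(congr1 sval) /= E.
  have : teq t t by apply: teq_refl.
  by rewrite -E.
- move=> st; apply: eq_exist; apply: funext => u; apply: propext; split.
    by move=> su; apply: teq_trans (teq_sym st) su.
  by move=> tu; apply: teq_trans st tu.
Qed.

Definition trep (a : tens) : L := projT1 (cid (svalP a)).
Lemma trepK a : tpi (trep a) = a.
Proof.
case: a => C HC; rewrite /trep; case: (cid (svalP (exist _ C HC))) => s /= E.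
exact: (eq_exist _ _ (esym E)).
Qed.
Lemma tens_ind (a : tens) : exists s, a = tpi s.
Proof. by exists (trep a); rewrite trepK. Qed.
Lemma trep_pi s : teq (trep (tpi s)) s.
Proof. by apply/tpi_eq; rewrite trepK. Qed.

Definition tadd (a b : tens) := tpi (trep a ++ trep b).
Definition topp (a : tens) := tpi (negs (trep a)).
Definition tzero := tpi [::].

Lemma taddE s t : tadd (tpi s) (tpi t) = tpi (s ++ t).
Proof. by apply/tpi_eq; apply: teq_cat; apply: trep_pi. Qed.
Lemma toppE s : topp (tpi s) = tpi (negs s).
Proof. by apply/tpi_eq; apply: negs_teq; apply: trep_pi. Qed.

Lemma taddA : associative tadd.
Proof.
move=> a b c; case: (tens_ind a) (tens_ind b) (tens_ind c) => [s ->] [t ->] [u ->].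
by rewrite !taddE catA.
Qed.
Lemma taddC : commutative tadd.
Proof.
move=> a b; case: (tens_ind a) (tens_ind b) => [s ->] [t ->].
by rewrite !taddE; apply/tpi_eq; apply: teq_catC.
Qed.
Lemma tadd0 : left_id tzero tadd.
Proof. by move=> a; case: (tens_ind a) => [s ->]; rewrite taddE. Qed.
Lemma taddN : left_inverse tzero topp tadd.
Proof.
move=> a; case: (tens_ind a) => [s ->]; rewrite toppE taddE.
by apply/tpi_eq; apply: negs_cancel.
Qed.
HB.instance Definition _ := GRing.isZmodule.Build tens taddA taddC tadd0 taddN.

Lemma tpiD s t : tpi (s ++ t) = tpi s + tpi t.
Proof. by rewrite -taddE. Qed.
Lemma tpi_cons a s : tpi (a :: s) = tpi [:: a] + tpi s.
Proof. by rewrite -tpiD. Qed.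
Lemma tpiN s : tpi (negs s) = - tpi s.
Proof. by rewrite -toppE. Qed.





Definition beta (g : {linear X -> dualR P}) (s : L) : QZ := \sum_(px <- s) g px.2 px.1.

Lemma beta_teq g s t : teq s t -> beta g s = beta g t.
Proof.
rewrite /beta; elim=> {s t}.
- by [].
- by move=> s t _ ->.
- by move=> s t u _ -> _ ->.
- by move=> s1 t1 s2 t2 _ E1 _ E2; rewrite !big_cat E1 E2.
- by move=> a b; rewrite !big_cons !big_nil !addr0 addrC.
- by move=> p p' x; rewrite !big_cons !big_nil /= !addr0 cd_add.
- by move=> p x x'; rewrite !big_cons !big_nil /= !addr0 linearD.
- move=> p r x; rewrite !big_cons !big_nil /= !addr0.
  by rewrite linearZ.
- by move=> x; rewrite big_cons big_nil /= addr0 cd_0.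
Qed.

Definition chi_of g (a : tens) : QZ := beta g (trep a).
Lemma chi_ofE g s : chi_of g (tpi s) = beta g s.
Proof. exact: beta_teq (trep_pi s). Qed.
Lemma chi_add g : forall a b, chi_of g (a + b) = chi_of g a + chi_of g b.
Proof.
move=> a b; case: (tens_ind a) (tens_ind b) => [s ->] [t ->].
by rewrite -tpiD !chi_ofE /beta big_cat.
Qed.
Definition chiT g : chardual tens := CharDual (chi_add g).
Lemma chiTE g s : chiT g (tpi s) = beta g s.
Proof. exact: chi_ofE. Qed.

Section GT.
Variable chi : chardual tens.
Lemma gfun_add x : forall p q : P,
  chi (tpi [:: (p + q, x)]) = chi (tpi [:: (p, x)]) + chi (tpi [:: (q, x)]).
Proof.
move=> p q; rewrite -cd_add -tpiD; congr (chi _); apply/tpi_eq; exact: teq_addl.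
Qed.
Definition gfun (x : X) : dualR P := CharDual (gfun_add x).
Lemma gfun_lin : linear gfun.
Proof.
move=> r x y; apply: cd_ext => p /=.
have -> : tpi [:: (p, r *: x + y)] = tpi [:: ((r : R^c) *: p, x)] + tpi [:: (p, y)].
  rewrite -tpiD; apply/tpi_eq.
  apply: teq_trans (teq_addr _ _ _) _.
  exact: teq_cat (teq_sym (teq_bal _ _ _)) (teq_refl _).
by rewrite cd_add.
Qed.
Definition gT := mkLin gfun_lin.
Lemma gTE x p : gT x p = chi (tpi [:: (p, x)]). Proof. by []. Qed.

Lemma chi_sum s : chi (tpi s) = beta gT s.
Proof.
elim: s => [|a s IH]; first by rewrite /beta big_nil; apply: cd_0.
by rewrite tpi_cons cd_add IH /beta big_cons; case: a.
Qed.
End GT.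
End TensorQ.

Section TMap.
Variables (Pm1 P0 : lmodType R^c) (sigma : {linear Pm1 -> P0}) (X : lmodType R).

Definition mapT (s : seq (Pm1 * X)) : seq (P0 * X) :=
  map (fun px => (sigma px.1, px.2)) s.

Lemma mapT_teq s t : teq s t -> teq (mapT s) (mapT t).
Proof.
elim=> {s t} /=.
- by move=> s; apply: teq_refl.
- by move=> s t _; apply: teq_sym.
- by move=> s t u _ H1 _ H2; apply: teq_trans H1 H2.
- by move=> s1 t1 s2 t2 _ H1 _ H2; rewrite /mapT !map_cat; apply: teq_cat.
- by move=> a b; apply: teq_comm.
- by move=> p p' x; rewrite linearD; apply: teq_addl.
- by move=> p x x'; apply: teq_addr.
- by move=> p r x; rewrite linearZ; apply: teq_bal.
- by move=> x; rewrite linear0; apply: teq_zero.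
Qed.

Lemma mapT_negs s : mapT (negs s) = negs (mapT s).
Proof. by rewrite /mapT /negs -!map_comp; apply: eq_map => -[p x] /=; rewrite linearN. Qed.

Definition tau (a : tens Pm1 X) : tens P0 X := tpi (mapT (trep a)).
Lemma tauE s : tau (tpi s) = tpi (mapT s).
Proof. by apply/tpi_eq; apply: mapT_teq; apply: trep_pi. Qed.
Lemma tauB : forall a b, tau (a - b) = tau a - tau b.
Proof.
move=> a b; case: (tens_ind a) (tens_ind b) => [s ->] [t ->].
by rewrite -tpiN -tpiD !tauE /mapT map_cat -/(mapT _) -/(mapT _) mapT_negs tpiD tpiN.
Qed.

Lemma beta_map (g : {linear X -> dualR Pm1}) (h : {linear X -> dualR P0}) s :
  (forall x, dualmapR sigma (h x) = g x) -> beta h (mapT s) = beta g s.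
Proof.
move=> Hh; rewrite /beta /mapT big_map; apply: eq_bigr => -[p x] _ /=.
by rewrite -(Hh x).
Qed.

Lemma TC_iff : Tcat sigma X <-> Ccat (dualmapR sigma) X.
Proof.
split.
- move=> HT g.
  have itau : injective tau.
    move=> a b; case: (tens_ind a) (tens_ind b) => [s ->] [t ->].
    by rewrite !tauE => /tpi_eq /HT /tpi_eq.
  have [psi Hpsi] := @ext_along _ _ tau (chiT g) tauB itau.
  exists (gT psi) => x; apply: cd_ext => p.
  rewrite -[dualmapR sigma _ p]/(gT psi x (sigma p)) gTE.
  rewrite -[[:: (sigma p, x)]]/(mapT [:: (p, x)]) -tauE Hpsi chiTE.
  by rewrite /beta big_cons big_nil addr0.
- move=> HC s t Hst; apply: contrapT => nst.
  have ne : tpi s - tpi t != 0.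
    by rewrite subr_eq0; apply/negP => /eqP /tpi_eq.
  have [chi Hchi] := sep_zero ne.
  have [h Hh] := HC (gT chi).
  move: Hchi; rewrite cd_B !chi_sum -!(beta_map _ Hh).
  by rewrite (beta_teq h Hst) subrr eqxx.
Qed.
End TMap.

Definition lamR (X : lmodType R) a b (M : 'I_a -> 'I_b -> R) (v : {ffun 'I_b -> X})
  : {ffun 'I_a -> X} := [ffun i => \sum_j M i j *: v j].
Definition lamC (Y : lmodType R^c) a b (M : 'I_a -> 'I_b -> R) (v : {ffun 'I_b -> Y})
  : {ffun 'I_a -> Y} := [ffun i => \sum_j (M i j : R^c) *: v j].
Definition trM a b (M : 'I_a -> 'I_b -> R) : 'I_b -> 'I_a -> R := fun j i => M i j.

Lemma lamRB (X : lmodType R) a b M : forall x y : {ffun 'I_b -> X},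
  @lamR X a b M (x - y) = lamR M x - lamR M y.
Proof.
move=> x y; apply/ffunP => i; rewrite !ffunE -sumrB; apply: eq_bigr => j _.
by rewrite !ffunE scalerBr.
Qed.
Lemma lamCB (Y : lmodType R^c) a b M : forall x y : {ffun 'I_b -> Y},
  @lamC Y a b M (x - y) = lamC M x - lamC M y.
Proof.
move=> x y; apply/ffunP => i; rewrite !ffunE -sumrB; apply: eq_bigr => j _.
by rewrite !ffunE scalerBr.
Qed.

Lemma adjR (Y : lmodType R^c) a b (M : 'I_a -> 'I_b -> R) :
  adjoint (U := Y) (@lamC Y b a (trM M)) (@lamR (dualR Y) a b M).
Proof.
move=> phi y; rewrite !tcharE.
under eq_bigr => j _ do rewrite ffunE cd_sum.
under [RHS]eq_bigr => i _ do rewrite ffunE cdsumE.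
rewrite exchange_big /=; apply: eq_bigr => i _; apply: eq_bigr => j _.
by [].
Qed.

Lemma adjL (X : lmodType R) a b (M : 'I_a -> 'I_b -> R) :
  adjoint (U := X) (@lamR X a b M) (@lamC (dualL X) b a (trM M)).
Proof.
move=> phi y; rewrite !tcharE.
under eq_bigr => j _ do rewrite ffunE cd_sum.
under [RHS]eq_bigr => i _ do rewrite ffunE cdsumE.
rewrite exchange_big /=; apply: eq_bigr => i _; apply: eq_bigr => j _.
by [].
Qed.

Definition PhiY (Y : lmodType R^c) n m (A : 'I_n -> 'I_n -> R) (C : 'I_m -> 'I_n -> R) :=
  forall y : {ffun 'I_n -> Y}, exists u : {ffun 'I_m -> Y},
    lamC (trM A) y = lamC (trM C) u.

Lemma Phi_dd (Y : lmodType R^c) n m A C :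
  @PhiY Y n m A C <-> @PhiY (dualL (dualR Y)) n m A C.
Proof.
rewrite /PhiY.
rewrite (G1 (@lamCB Y _ _ (trM C)) (adjR A) (adjR C)).
rewrite (G2 (@lamRB (dualR Y) _ _ C) (@lamRB (dualR Y) _ _ A) (adjL C) (adjL A)).
split.
- move=> H y; have [u E] := H y; by exists u.
- move=> H y; have [u E] := H y; by exists u.
Qed.

Lemma dual_basis (P : lmodType R^c) : fin_gen P -> projective_mod P ->
  exists n (v : 'I_n -> P) (k : {linear P -> {ffun 'I_n -> (R^c)^o}}),
    forall p, p = \sum_i (k p i : R^c) *: v i.
Proof.
move=> [n [v Hv]] HP.
pose pi (c : {ffun 'I_n -> (R^c)^o}) : P := \sum_i (c i : R^c) *: v i.
have piL : linear pi.
  move=> r c d; rewrite /pi scaler_sumr -big_split; apply: eq_bigr => i _ /=.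
  by rewrite !ffunE scalerDl scalerA.
have idL : linear (fun p : P => p) by [].
have surj : forall p : P, exists c, mkLin piL c = p.
  move=> p; have [c Hc] := Hv p; exists [ffun i => c i].
  by rewrite mkLinE /pi Hc; apply: eq_bigr => i _; rewrite ffunE.
have [k Hk] := HP _ _ (mkLin piL) (mkLin idL) surj.
by exists n, v, k => p; have := Hk p; rewrite !mkLinE /pi => ->.
Qed.

Lemma DB_iff (P Q : lmodType R^c) (sigma : {linear P -> Q}) :
  fin_gen P -> projective_mod P -> fin_gen Q -> projective_mod Q ->
  exists n m (A : 'I_n -> 'I_n -> R) (C : 'I_m -> 'I_n -> R),
    forall Y : lmodType R^c, Dcat sigma Y <-> @PhiY Y n m A C.
Proof.
move=> fP pP fQ pQ.
have [n [v [k Hk]]] := dual_basis fP pP.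
have [m [w [l Hl]]] := dual_basis fQ pQ.
have expP (Y : lmodType R^c) (g : {linear P -> Y}) p : g p = \sum_i (k p i : R^c) *: g (v i).
  by rewrite {1}(Hk p) linear_sum; apply: eq_bigr => i _; rewrite linearZ.
have expQ (Y : lmodType R^c) (g : {linear Q -> Y}) q : g q = \sum_i (l q i : R^c) *: g (w i).
  by rewrite {1}(Hl q) linear_sum; apply: eq_bigr => i _; rewrite linearZ.
exists n, m, (fun i j => k (v j) i), (fun i j => l (sigma (v j)) i) => Y; split.
- move=> HD y.
  pose f (p : P) : Y := \sum_i (k p i : R^c) *: y i.
  have fL : linear f.
    move=> r p q; rewrite /f scaler_sumr -big_split; apply: eq_bigr => i _ /=.
    by rewrite linearP !ffunE scalerDl scalerA.
  have [g Hg] := HD (mkLin fL).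
  exists [ffun i => g (w i)]; apply/ffunP => j; rewrite !ffunE.
  rewrite [RHS](eq_bigr (fun i => (l (sigma (v j)) i : R^c) *: g (w i))); last first.
    by move=> i _; rewrite ffunE.
  by rewrite -expQ Hg mkLinE.
- move=> HP f.
  have [u Hu] := HP [ffun i => f (v i)].
  pose g (q : Q) : Y := \sum_i (l q i : R^c) *: u i.
  have gL : linear g.
    move=> r p q; rewrite /g scaler_sumr -big_split; apply: eq_bigr => i _ /=.
    by rewrite linearP !ffunE scalerDl scalerA.
  exists (mkLin gL) => p.
  have Hv j : mkLin gL (sigma (v j)) = f (v j).
    have E := congr1 (fun z : {ffun 'I_n -> Y} => z j) Hu; rewrite /= !ffunE in E.
    rewrite mkLinE /g (expP _ f (v j)); symmetry.
    apply: etrans _ E; apply: eq_bigr => i _; by rewrite ffunE.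
  rewrite (expP _ sigma p) linear_sum (expP _ f p); apply: eq_bigr => j _.
  by rewrite linearZ Hv.
Qed.


Definition compL (A B C : lmodType R^c) (f : {linear B -> C}) (g : {linear A -> B})
  : {linear A -> C} := @mkLin _ A C (fun x => f (g x))
      (fun r x y => etrans (congr1 f (linearP g r x y)) (linearP f r (g x) (g y))).
Lemma compLE A B C f g x : @compL A B C f g x = f (g x). Proof. by []. Qed.

Section DSum.
Variables (I : Type) (P : I -> lmodType R^c).
Definition idx : Type := I.
HB.instance Definition _ := gen_eqMixin idx.
HB.instance Definition _ := gen_choiceMixin idx.

Definition dsfin (f : forall i : idx, P i) := exists l : seq idx, forall i, f i != 0 -> i \in l.
Definition DS : Type := {f : forall i : idx, P i | dsfin f}.
HB.instance Definition _ := gen_eqMixin DS.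
HB.instance Definition _ := gen_choiceMixin DS.

Lemma ds_ext (f g : DS) : (forall i, sval f i = sval g i) -> f = g.
Proof.
case: f g => [f Hf] [g Hg] /= E.
have fg : f = g by apply: functional_extensionality_dep.
by apply: eq_exist.
Qed.

Lemma dsfin0 : dsfin (fun i => 0).
Proof. by exists [::] => i; rewrite eqxx. Qed.
Lemma dsfin_add (f g : forall i : idx, P i) : dsfin f -> dsfin g -> dsfin (fun i => f i + g i).
Proof.
move=> [l1 H1] [l2 H2]; exists (l1 ++ l2) => i; rewrite mem_cat.
case: (f i =P 0) => [fi0|/eqP fi].
  by rewrite fi0 add0r => /H2 ->; rewrite orbT.
by rewrite H1.
Qed.
Lemma dsfin_opp (f : forall i : idx, P i) : dsfin f -> dsfin (fun i => - f i).
Proof. by move=> [l H]; exists l => i; rewrite oppr_eq0; apply: H. Qed.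
Lemma dsfin_scale r (f : forall i : idx, P i) : dsfin f -> dsfin (fun i => r *: f i).
Proof.
move=> [l H]; exists l => i; case: (f i =P 0) => [->|/eqP fi]; first by rewrite scaler0 eqxx.
by move=> _; apply: H.
Qed.

Definition ds0 : DS := exist _ _ dsfin0.
Definition dsadd (f g : DS) : DS := exist _ _ (dsfin_add (svalP f) (svalP g)).
Definition dsopp (f : DS) : DS := exist _ _ (dsfin_opp (svalP f)).
Definition dsscale (r : R^c) (f : DS) : DS := exist _ _ (dsfin_scale r (svalP f)).

Lemma dsaddA : associative dsadd.
Proof. by move=> f g h; apply: ds_ext => i /=; rewrite addrA. Qed.
Lemma dsaddC : commutative dsadd.
Proof. by move=> f g; apply: ds_ext => i /=; rewrite addrC. Qed.
Lemma dsadd0 : left_id ds0 dsadd.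
Proof. by move=> f; apply: ds_ext => i /=; rewrite add0r. Qed.
Lemma dsaddN : left_inverse ds0 dsopp dsadd.
Proof. by move=> f; apply: ds_ext => i /=; rewrite addNr. Qed.
HB.instance Definition _ := GRing.isZmodule.Build DS dsaddA dsaddC dsadd0 dsaddN.

Lemma dsscaleA a b (f : DS) : dsscale a (dsscale b f) = dsscale (a * b) f.
Proof. by apply: ds_ext => i /=; rewrite scalerA. Qed.
Lemma dsscale1 : left_id 1 dsscale.
Proof. by move=> f; apply: ds_ext => i /=; rewrite scale1r. Qed.
Lemma dsscaleDr : right_distributive dsscale +%R.
Proof. by move=> a f g; apply: ds_ext => i /=; rewrite scalerDr. Qed.
Lemma dsscaleDl (f : DS) : {morph dsscale^~ f : a b / a + b}.
Proof. by move=> a b; apply: ds_ext => i /=; rewrite scalerDl. Qed.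
HB.instance Definition _ :=
  GRing.Zmodule_isLmodule.Build R^c DS dsscaleA dsscale1 dsscaleDr dsscaleDl.

Lemma sval_sum (T : Type) (r : seq T) (F : T -> DS) k :
  sval (\sum_(i <- r) F i) k = \sum_(i <- r) sval (F i) k.
Proof.
elim: r => [|a r IH]; first by rewrite !big_nil.
by rewrite !big_cons -IH.
Qed.

Definition supp (f : DS) : seq idx := undup (projT1 (cid (svalP f))).
Lemma supp_uniq f : uniq (supp f). Proof. exact: undup_uniq. Qed.
Lemma supp_cover (f : DS) i : sval f i != 0 -> i \in supp f.
Proof.
rewrite /supp mem_undup; case: (cid (svalP f)) => l /= H; exact: H.
Qed.

Section Sumg.
Variables (Y : zmodType) (g : forall i : idx, P i -> Y) (g0 : forall i, @g i 0 = 0).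
Definition sumg (f : DS) := \sum_(i <- supp f) @g i (sval f i).

Lemma sum_nz (f : DS) l : \sum_(i <- l) @g i (sval f i) = \sum_(i <- l | sval f i != 0) @g i (sval f i).
Proof.
rewrite [RHS]big_mkcond; apply: eq_bigr => i _.
by case: (sval f i =P 0) => [->|]; rewrite ?g0.
Qed.

Lemma sumgE (f : DS) l : uniq l -> (forall i, sval f i != 0 -> i \in l) ->
  sumg f = \sum_(i <- l) @g i (sval f i).
Proof.
move=> ul cl; rewrite /sumg !sum_nz -!(big_filter _ (fun i => sval f i != 0)).
apply: perm_big; apply: uniq_perm; rewrite ?filter_uniq ?supp_uniq //.
move=> i; rewrite !mem_filter; case: (sval f i =P 0) => [//|/eqP nz] /=.
by rewrite cl ?supp_cover.
Qed.
End Sumg.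

Definition iota_fun (j : idx) (p : P j) : forall i : idx, P i :=
  fun i => match pselect (j = i) with left e => eq_rect j P p i e | right _ => 0 end.
Lemma iota_fin (j : idx) (p : P j) : dsfin (@iota_fun j p).
Proof.
exists [:: j] => i; rewrite /iota_fun; case: pselect => [e _|_]; last by rewrite eqxx.
by rewrite -e mem_seq1 eqxx.
Qed.
Lemma iota_at j (p : P j) : iota_fun p j = p.
Proof.
rewrite /iota_fun; case: pselect => [e|ne]; last by exfalso; apply: ne.
by rewrite (Prop_irrelevance e erefl).
Qed.
Lemma iota_ne j (p : P j) i : j <> i -> iota_fun p i = 0.
Proof. by rewrite /iota_fun; case: pselect. Qed.

Definition iota_f j (p : P j) : DS := exist _ _ (iota_fin p).
Lemma iota_lin (j : idx) : linear (@iota_f j).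
Proof.
move=> r p q; apply: ds_ext => i /=; rewrite /iota_fun.
case: pselect => [e|ne]; last by rewrite scaler0 addr0.
by destruct e.
Qed.
Definition iota (j : idx) := mkLin (@iota_lin j).
Lemma iotaE j p i : sval (iota j p) i = iota_fun p i. Proof. by []. Qed.

Lemma ds_decomp (f : DS) l : uniq l -> (forall i, sval f i != 0 -> i \in l) ->
  f = \sum_(i <- l) iota i (sval f i).
Proof.
move=> ul cl; apply: ds_ext => k; rewrite sval_sum.
case kl: (k \in l).
  rewrite (bigD1_seq k) // iotaE iota_at big1 /=; first by rewrite addr0.
  move=> i ik.
  by rewrite iota_ne // => E; rewrite E eqxx in ik.
rewrite big_seq big1.
  by apply/eqP; apply/negP => /negP /cl; rewrite kl.
move=> i il; rewrite iotaE iota_ne // => E; by rewrite -E il in kl.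
Qed.

Section Copair.
Variables (Y : lmodType R^c) (g : forall i : idx, {linear P i -> Y}).
Definition copair_fun (f : DS) : Y := sumg (fun i => g i) f.
Lemma copairE f l : uniq l -> (forall i, sval f i != 0 -> i \in l) ->
  copair_fun f = \sum_(i <- l) g i (sval f i).
Proof. by move=> ul cl; apply: sumgE => // i; rewrite linear0. Qed.
Lemma copair_lin : linear copair_fun.
Proof.
move=> r f f'.
pose l := undup (supp f ++ supp f' ++ supp (r *: f + f')).
have ul : uniq l by apply: undup_uniq.
rewrite !(@copairE _ l) //.
- rewrite scaler_sumr -big_split; apply: eq_bigr => i _ /=.
  by rewrite linearP.
- by move=> i /supp_cover H; rewrite mem_undup !mem_cat H ?orbT.
- by move=> i /supp_cover H; rewrite mem_undup !mem_cat H ?orbT.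
- by move=> i /supp_cover H; rewrite mem_undup !mem_cat H ?orbT.
Qed.
Definition copair := mkLin copair_lin.
Lemma copair_iota j p : copair (iota j p) = g j p.
Proof.
rewrite mkLinE (@copairE _ [:: j]) // ?big_seq1 ?iotaE ?iota_at //.
move=> i; rewrite iotaE /iota_fun; case: pselect => [e _|_]; last by rewrite eqxx.
by rewrite -e mem_seq1 eqxx.
Qed.
End Copair.

Lemma ds_proj : (forall i, projective_mod (P i)) -> projective_mod DS.
Proof.
move=> HP M N g f surj.
have H i : exists h : {linear P i -> M}, forall p, g (h p) = compL f (iota i) p.
  exact: HP.
pose h i := projT1 (cid (H i)).
exists (copair h) => F.
rewrite mkLinE (copairE h (supp_uniq F) (@supp_cover F)) linear_sum.
rewrite [in RHS](ds_decomp (supp_uniq F) (@supp_cover F)) linear_sum.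
apply: eq_bigr => i _; rewrite /h; case: (cid (H i)) => hi /= ->.
by [].
Qed.
End DSum.

Section DSMap.
Variables (I : Type) (P Q : I -> lmodType R^c) (s : forall i, {linear P i -> Q i}).

Lemma dsmap_fin (F : DS P) : dsfin (fun i : idx I => s i (sval F i)).
Proof.
case: (svalP F) => l H; exists l => i; case: (sval F i =P 0) => [->|/eqP nz].
  by rewrite linear0 eqxx.
by move=> _; apply: H.
Qed.
Definition dsmap_f (F : DS P) : DS Q := exist _ _ (dsmap_fin F).
Lemma dsmap_lin : linear dsmap_f.
Proof. by move=> r F G; apply: ds_ext => i /=; rewrite linearP. Qed.
Definition dsmap := mkLin dsmap_lin.

Lemma dsmap_iota i p : dsmap (iota P i p) = iota Q i (s i p).
Proof.
apply: ds_ext => k; rewrite /= /iota_fun.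
case: pselect => [e|ne]; last by rewrite linear0.
by destruct e.
Qed.

Lemma ds_D (Y : lmodType R^c) : Dcat dsmap Y <-> forall i, Dcat (s i) Y.
Proof.
split.
- move=> HD i f.
  have prL : linear (fun F : DS P => sval F i) by [].
  have [G HG] := HD (compL f (mkLin prL)).
  exists (compL G (iota Q i)) => p.
  by rewrite compLE -dsmap_iota HG compLE mkLinE iotaE iota_at.
- move=> HD f.
  have H i : exists g : {linear Q i -> Y}, forall p, g (s i p) = compL f (iota P i) p.
    exact: HD.
  pose g i := projT1 (cid (H i)).
  exists (copair g) => F.
  rewrite mkLinE (copairE g (supp_uniq F)); last first.
    move=> i /= nz; apply: supp_cover; apply/eqP => E; move: nz; by rewrite E linear0 eqxx.
  rewrite [in RHS](ds_decomp (supp_uniq F) (@supp_cover _ _ F)) linear_sum.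
  apply: eq_bigr => i _; rewrite /g; case: (cid (H i)) => gi /= ->.
  by [].
Qed.
End DSMap.

Lemma part3_fwd (E0 E1 : lmodType R) (lambda : {linear E0 -> E1}) :
  cofinite_type lambda ->
  exists (Pm1 P0 : lmodType R^c) (sigma : {linear Pm1 -> P0}),
    [/\ projective_mod Pm1, projective_mod P0, finite_type sigma &
        forall X : lmodType R, Ccat lambda X <-> Ccat (dualmapR sigma) X].
Proof.
move=> [I [P [Q [s [Hfg HC]]]]].
exists (DS P), (DS Q), (dsmap s); split.
- by apply: ds_proj => i; have [_ [? _]] := Hfg i.
- by apply: ds_proj => i; have [_ [_ [_ ?]]] := Hfg i.
- by exists I, P, Q, s; split => // Y; apply: ds_D.
- move=> X; rewrite HC CD_iff ds_D.
  by split => H i; [rewrite -CD_iff -TC_iff | rewrite TC_iff CD_iff].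
Qed.

Lemma part2 (Pm1 P0 : lmodType R^c) (sigma : {linear Pm1 -> P0}) :
  finite_type sigma -> forall Y : lmodType R^c,
    Dcat sigma Y <-> Ccat (dualmapR sigma) (dualR Y).
Proof.
move=> [I [P [Q [s [Hfg HD]]]]] Y.
rewrite CD_iff !HD.
have key i (Z : lmodType R^c) : Dcat (s i) Z <-> Dcat (s i) (dualL (dualR Z)).
  have [fP [pP [fQ pQ]]] := Hfg i.
  have [n [m [A [C HC]]]] := DB_iff (s i) fP pP fQ pQ.
  by rewrite !HC Phi_dd.
by split => H i; [rewrite -key | rewrite key].
Qed.

Lemma part3_back (E0 E1 : lmodType R) (lambda : {linear E0 -> E1})
  (Pm1 P0 : lmodType R^c) (sigma : {linear Pm1 -> P0}) :
  finite_type sigma ->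
  (forall X : lmodType R, Ccat lambda X <-> Ccat (dualmapR sigma) X) ->
  cofinite_type lambda.
Proof.
move=> [I [P [Q [s [Hfg HD]]]]] HC.
exists I, P, Q, s; split => // X.
rewrite HC CD_iff HD.
by split => H i; [rewrite TC_iff CD_iff | rewrite -CD_iff -TC_iff].
Qed.
End Adj.

Theorem lemma3p2 (R : pzRingType) :
  (forall (Pm1 P0 : lmodType R^c) (sigma : {linear Pm1 -> P0}),
     projective_mod Pm1 -> projective_mod P0 ->
     [/\ injective_mod (dualR P0) /\ injective_mod (dualR Pm1),
         (forall X : lmodType R,
            Tcat sigma X <-> Ccat (dualmapR sigma) X),
         (forall X : lmodType R,
            Ccat (dualmapR sigma) X <-> Dcat sigma (dualL X))
       & finite_type sigma ->
         forall Y : lmodType R^c,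
           Dcat sigma Y <-> Ccat (dualmapR sigma) (dualR Y)]) /\
  (forall (E0 E1 : lmodType R) (lambda : {linear E0 -> E1}),
     injective_mod E0 -> injective_mod E1 ->
     (cofinite_type lambda <->
      exists (Pm1 P0 : lmodType R^c) (sigma : {linear Pm1 -> P0}),
        [/\ projective_mod Pm1, projective_mod P0, finite_type sigma &
            forall X : lmodType R,
              Ccat lambda X <-> Ccat (dualmapR sigma) X])).
Proof.
split.
- move=> Pm1 P0 sigma pm1 p0; split.
  + by split; apply: dual_inj.
  + exact: TC_iff.
  + exact: CD_iff.
  + exact: part2.
- move=> E0 E1 lambda _ _; split.
  + exact: part3_fwd.
  + by move=> [Pm1 [P0 [sigma [_ _ Hf HC]]]]; apply: part3_back Hf HC.
Qed.
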